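(* Let $M'=M[D,K]$ be a compatible minor of the weighted uncertainty matroid $\mathcal{M}$ such that $M'$ contains no non-trivial element $f$ with either (a) $w_f=L_f$ and $f$ a maximum-weight element of some circuit of $M'$, or (b) $w_f=U_f$ and $f$ a minimum-weight element of $E(M')\setminus\mathrm{span}_{M'}(B'\setminus\{f\})$ for some basis $B'$ of $M'$ containing $f$. Let $e$ be a trivial element of $M'$ such that (i) there exists a circuit $C$ of $M'$ with $e\in C$ and (ii) $e$ has maximum weight in $C$. Then $M[D\cup\{e\},K]$ is a compatible minor of $\mathcal{M}$.
   Context: A weighted uncertainty matroid $\mathcal{M}=(E,\mathcal{I},A,w)$ consists of a matroid $M=(E,\mathcal{I})$ on a finite set $E$, for each $e\in E$ a non-empty finite union $A_e$ of bounded real intervals (each open or closed), a weight $w_e\in A_e$, and a query cost $c_e\ge0$. $L_e=\inf A_e$, $U_e=\sup A_e$; $e$ is trivial if $A_e=\{w_e\}$. A minimum-weight basis (MWB) is a basis minimizing total weight. A weight assignment is $w^*$ with $w^*_e\in A_e$, consistent with $Q$ if $w^*_e=w_e$ on $Q$. $Q$ verifies an MWB $B$ if for every weight assignment consistent with $Q$, $B$ is an MWB with respect to it; a certificate for $\mathcal{M}$ is a set verifying some MWB, and $c^*$ denotes the minimum cost $\sum_{e\in Q}c_e$ of a certificate for $\mathcal{M}$. For $D,K\subseteq E$, $M[D,K]$ is the matroid obtained from $M$ by deleting $D$ and contracting $K$, ground set $E(M[D,K])=E\setminus(D\cup K)$, weights restricted. $M[D,K]$ is a compatible minor if there is a set $Q$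 of cost $c^*$ verifying an MWB $B$ of $\mathcal{M}$ with $K\subseteq B$, $D\cap B=\emptyset$. $\mathrm{span}_N(X)=\{e: r_N(X\cup\{e\})=r_N(X)\}$. *)

(* Defs.v *)
From mathcomp Require Import all_boot all_order all_algebra.
From mathcomp Require classical_sets.
From mathcomp Require Import reals.
Set Implicit Arguments. Unset Strict Implicit. Unset Printing Implicit Defensive.
Import Order.TTheory GRing.Theory Num.Theory.
Local Open Scope ring_scope.

Definition matroid_axioms (E : finType) (indep : {set E} -> bool) : Prop :=
  [/\ indep set0,
      (forall X Y : {set E}, Y \subset X -> indep X -> indep Y) &
      (forall X Y : {set E}, indep X -> indep Y -> (#|X| < #|Y|)%N ->
          exists2 y, y \in Y :\: X & indep (y |: X))].

Definition rank (E : finType) (indep : {set E} -> bool) (X : {set E}) : nat :=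
  (\max_(I : {set E} | (I \subset X) && indep I) #|I|)%N.

Section Minor.
Variables (E : finType) (indep : {set E} -> bool) (D K : {set E}).

Definition mground : {set E} := ~: (D :|: K).
(* rank of the minor M[D,K] = (M \ D) / K : r'(X) = r(X u K) - r(K) *)
Definition mrank (X : {set E}) : nat := (rank indep (X :|: K) - rank indep K)%N.
Definition mindep (X : {set E}) : bool := (X \subset mground) && (mrank X == #|X|).
Definition mbasis (B : {set E}) : bool :=
  mindep B && [forall x in mground :\: B, ~~ mindep (x |: B)].
Definition mcircuit (C : {set E}) : bool :=
  [&& C \subset mground, ~~ mindep C & [forall x in C, mindep (C :\ x)]].
Definition mspan (X : {set E}) : {set E} :=
  [set x in mground | mrank (x |: X) == mrank X].
End Minor.

Definition bounded_itv (R : numDomainType) (i : interval R) : bool :=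
  if i is Interval (BSide _ _) (BSide _ _) then true else false.

Record umatroid (R : realType) (E : finType) := UMatroid {
  uindep : {set E} -> bool;
  uindep_axioms : matroid_axioms uindep;
  uA : E -> seq (interval R);
  uA_bounded : forall e, all (@bounded_itv R) (uA e);
  uA_nonempty : forall e, exists x, has (fun i => x \in i) (uA e);
  uw : E -> R;
  uw_in : forall e, has (fun i => uw e \in i) (uA e);
  uc : E -> R;
  uc_ge0 : forall e, 0 <= uc e }.

Section Uncertainty.
Variables (R : realType) (E : finType) (M : umatroid R E).

Definition Aset (e : E) : classical_sets.set R := fun x => has (fun i => x \in i) (uA M e).
Definition uL (e : E) : R := inf (Aset e).
Definition uU (e : E) : R := sup (Aset e).
Definition utrivial (e : E) : Prop := Aset e = (fun x => x = uw M e).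

Definition wassign (ws : E -> R) : Prop := forall e, Aset e (ws e).
Definition consistent (Q : {set E}) (ws : E -> R) : Prop :=
  forall e, e \in Q -> ws e = uw M e.

Definition mwb (ws : E -> R) (B : {set E}) : Prop :=
  mbasis (uindep M) set0 set0 B /\
  forall B', mbasis (uindep M) set0 set0 B' ->
    \sum_(e in B) ws e <= \sum_(e in B') ws e.

Definition verifies (Q B : {set E}) : Prop :=
  forall ws, wassign ws -> consistent Q ws -> mwb ws B.

Definition certificate (Q : {set E}) : Prop :=
  exists B, mwb (uw M) B /\ verifies Q B.

Definition cost (Q : {set E}) : R := \sum_(e in Q) uc M e.

Definition compatible_minor (D K : {set E}) : Prop :=
  exists Q B, [/\ verifies Q B, mwb (uw M) B, K \subset B, [disjoint D & B] &
    forall Q', certificate Q' -> cost Q <= cost Q'].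
End Uncertainty.

(* Main.v *)
Require Import Defs.
From mathcomp Require Import all_boot all_order all_algebra.
From mathcomp Require Import reals.
From mathcomp Require Import zify.
From mathcomp Require Import lra.
From mathcomp Require classical_sets.
Import Order.TTheory GRing.Theory Num.Theory.

Section Mat.
Variables (E : finType) (indep : {set E} -> bool).
Hypothesis ax : matroid_axioms indep.

Lemma ind0 : indep set0. Proof. by case: ax. Qed.
Lemma indS (X Y : {set E}) : Y \subset X -> indep X -> indep Y. Proof. by case: ax => _ H _; apply: H. Qed.
Lemma indA (X Y : {set E}) : indep X -> indep Y -> (#|X| < #|Y|)%N ->
          exists2 y, y \in Y :\: X & indep (y |: X).
Proof. by case: ax => _ _ H; apply: H. Qed.

Arguments indA {X Y}.
Arguments indS {X Y}.
Lemma rank_ge (X I : {set E}) : I \subset X -> indep I -> (#|I| <= rank indep X)%N.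
Proof. move=> sIX iI; rewrite /rank. have H : (I \subset X) && indep I by rewrite sIX iI.
exact: (@leq_bigmax_cond _ _ (fun J : {set E} => #|J|) I H). Qed.

Lemma rank_wit (X : {set E}) : exists I : {set E}, [/\ I \subset X, indep I & #|I| = rank indep X].
Proof.
have h : (0 < #|[pred I : {set E} | (I \subset X) && indep I]|)%N.
  apply/card_gt0P; exists set0; by rewrite inE sub0set ind0.
case: (eq_bigmax_cond (fun I : {set E} => #|I|) h) => I.
rewrite inE => /andP[sIX iI] eq; exists I; split => //.

Qed.

Lemma rank_le_card (X : {set E}) : (rank indep X <= #|X|)%N.
Proof. apply/bigmax_leqP => I /andP[sIX _]; exact: subset_leq_card. Qed.

Lemma rank_indep (X : {set E}) : indep X -> rank indep X = #|X|.
Proof. move=> iX; apply/eqP; rewrite eqn_leq rank_le_card; exact: rank_ge. Qed.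

Lemma indep_rank (X : {set E}) : rank indep X = #|X| -> indep X.
Proof.
move=> eq; case: (rank_wit X) => I [sIX iI cI].
have : I == X by rewrite eqEcard sIX /= cI eq leqnn.
by move/eqP=> <-.
Qed.

Lemma rank_mono (X Y : {set E}) : X \subset Y -> (rank indep X <= rank indep Y)%N.
Proof.
move=> sXY; case: (rank_wit X) => I [sIX iI <-]; apply: rank_ge => //.
exact: subset_trans sXY.
Qed.

Lemma rank_add1 x (X : {set E}) : (rank indep (x |: X) <= (rank indep X).+1)%N.
Proof.
case: (rank_wit (x |: X)) => I [sI iI <-].
have : (#|I :\ x| <= rank indep X)%N.
  apply: rank_ge; last by apply: indS iI; apply: subsetDl.
  apply/subsetP => y; rewrite !inE => /andP[ne yI].
  by move/subsetP: sI => /(_ y yI); rewrite !inE (negbTE ne).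
have := cardsD1 x I; lia.
Qed.

Lemma rank_ext (X : {set E}) : forall k (I : {set E}), (rank indep X - #|I| <= k)%N -> I \subset X -> indep I ->
  exists J : {set E}, [/\ I \subset J, J \subset X, indep J & #|J| = rank indep X].
Proof.
elim=> [|k IH] I hk sIX iI.
  exists I; split => //; apply/eqP; rewrite eqn_leq rank_ge //=; lia.
case: (ltnP #|I| (rank indep X)) => hlt; last first.
  exists I; split => //; apply/eqP; rewrite eqn_leq rank_ge //=.
case: (rank_wit X) => W [sWX iW cW].
have hc : (#|I| < #|W|)%N by rewrite cW.
case: (indA iI iW hc) => y; rewrite inE => /andP[yI yW] iyI.
have yX : y \in X by move/subsetP: sWX; apply.
case: (IH (y |: I)) => //.
- rewrite cardsU1 yI; lia.
- by rewrite subUset sub1set yX sIX.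
move=> J [s1 s2 s3 s4]; exists J; split => //.
exact: subset_trans (subsetUr _ _) s1.
Qed.

Lemma mindep0 (X : {set E}) : mindep indep set0 set0 X = indep X.
Proof.
rewrite /mindep /mground /mrank !setU0 setC0 subsetT /=.
have -> : rank indep set0 = 0%N.
  apply/eqP; rewrite -leqn0; apply: leq_trans (rank_le_card _) _; by rewrite cards0.
rewrite subn0; apply/eqP/idP; [exact: indep_rank | exact: rank_indep].
Qed.

Lemma mbasis0P (B : {set E}) : mbasis indep set0 set0 B <-> indep B /\ forall x, x \notin B -> ~~ indep (x |: B).
Proof.
rewrite /mbasis mindep0; split.
  move=> /andP[iB /forallP H]; split => // x xB.
  have := H x; rewrite mindep0 /mground !inE xB /=; apply.
move=> [iB H]; rewrite iB /=; apply/forallP => x; apply/implyP.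
move=> xB; rewrite mindep0; apply: H; move: xB; rewrite !inE; by case/andP.
Qed.

Lemma basis_card (B X : {set E}) : mbasis indep set0 set0 B -> indep X -> #|X| = #|B| ->
  mbasis indep set0 set0 X.
Proof.
move=> /mbasis0P [iB HB] iX cX; apply/mbasis0P; split => // x xX.
apply/negP => ixX.
have hc : (#|B| < #|x |: X|)%N by rewrite cardsU1 xX cX.
case: (indA iB ixX hc) => y; rewrite inE => /andP[yB _] iyB.
by move: (HB y yB); rewrite iyB.
Qed.

Lemma ar1 (a b k n : nat) : (a - k = n -> b - k != n.+1 -> k <= a -> a <= b -> b <= a.+1 -> b = a)%N.
Proof. move=> *; lia. Qed.

Lemma exch (D K B C : {set E}) e : mbasis indep set0 set0 B -> K \subset B ->
  mcircuit indep D K C -> e \in C -> e \in B -> e \notin K ->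
  exists2 f, f \in C :\: B & mbasis indep set0 set0 (f |: (B :\ e)).
Proof.
move=> bB sKB /and3P[sC ndC /forallP ciC] eC eB eK.
have iB : indep B by case/mbasis0P: bB.
have := ciC e; rewrite eC /= /mindep => /andP[_ /eqP h1].
move: ndC; rewrite /mindep sC /= => h2.
rewrite /mrank in h1 h2.
set Z := (C :\ e) :|: K.
have hZ : C :|: K = e |: Z by rewrite /Z setUA setD1K.
have eZ : e \notin Z by rewrite /Z !inE eqxx /= (negbTE eK).
have cC1 := cardsD1 e C; rewrite eC add1n in cC1.
have m1 : (rank indep K <= rank indep Z)%N by apply: rank_mono; apply: subsetUr.
have m2 : (rank indep Z <= rank indep (C :|: K))%N by rewrite hZ; apply: rank_mono; apply: subsetUr.
have m3 := rank_add1 e Z; rewrite -hZ in m3.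
have rEq : rank indep (C :|: K) = rank indep Z.
  rewrite -/Z in h1; rewrite cC1 in h2. exact: (ar1 _ _ _ _ h1 h2 m1 m2 m3).
case: (rank_wit Z) => I [sIZ iI cI].
have sZW : e |: Z \subset B :|: C.
  by rewrite -hZ subUset subsetUr (subset_trans sKB) // subsetUl.
case: (@rank_ext (B :|: C) _ I (leqnn _)).
  - by apply: subset_trans sZW; apply: subset_trans sIZ _; apply: subsetUr.
  - exact: iI.
move=> J [sIJ sJW iJ cJ].
have eJ : e \notin J.
  apply/negP => eJ.
  have : (#|e |: I| <= rank indep (C :|: K))%N.
    apply: rank_ge; first by rewrite hZ; apply: setUS.
    by apply: indS iJ; rewrite subUset sub1set eJ sIJ.
  have eI : e \notin I by apply/negP => /(subsetP sIZ); rewrite (negbTE eZ).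
  by rewrite cardsU1 eI rEq cI add1n ltnn.
have cB1 := cardsD1 e B; rewrite eB add1n in cB1.
have cBJ : (#|B :\ e| < #|J|)%N.
  have : (#|B| <= rank indep (B :|: C))%N by apply: rank_ge => //; apply: subsetUl.
  by rewrite cB1 cJ.
case: (indA (indS (subsetDl B [set e]) iB) iJ cBJ) => f; rewrite !inE => /andP[hf fJ] ifB.
have fe : f != e by apply/negP => /eqP fe; rewrite -fe fJ in eJ.
move: hf; rewrite fe /= => fB.
exists f.
  move/subsetP: sJW => /(_ f fJ); rewrite !inE (negbTE fB) /= => ->; by [].
apply: (basis_card _ _ bB ifB).
by rewrite cardsU1 !inE fe fB /= add1n cB1.
Qed.
End Mat.

Local Open Scope ring_scope.

Theorem lemma21 (R : realType) (E : finType) (M : umatroid R E) (D K : {set E}) :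
  compatible_minor M D K ->
  (forall f, f \in mground D K -> ~ utrivial M f ->
     ~ ((uw M f = uL M f /\
         exists C, [/\ mcircuit (uindep M) D K C, f \in C &
                      forall g, g \in C -> uw M g <= uw M f])
        \/
        (uw M f = uU M f /\
         exists B', [/\ mbasis (uindep M) D K B', f \in B',
           f \in mground D K :\: mspan (uindep M) D K (B' :\ f) &
           forall g, g \in mground D K :\: mspan (uindep M) D K (B' :\ f) ->
             uw M f <= uw M g]))) ->
  forall e, e \in mground D K -> utrivial M e ->
  (exists C, [/\ mcircuit (uindep M) D K C, e \in C &
                forall g, g \in C -> uw M g <= uw M e]) ->
  compatible_minor M (e |: D) K.
Proof.
move=> [Q [B [vQB mB sKB dDB opt]]] Hnt e eG et [C [cC eC Cmax]].
have ax := uindep_axioms M.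
have [eD eK] : e \notin D /\ e \notin K.
  by move: eG; rewrite /mground !inE negb_or => /andP[].
case: (boolP (e \in B)) => eB; last first.
  exists Q, B; split => //.
  apply/pred0P => x /=; rewrite !inE.
  case: (eqVneq x e) => [->|_] /=; first by rewrite (negbTE eB) ?andbF ?andbT ?eqxx ?orTb.
  by move/pred0P: dDB => /(_ x).
have bB : mbasis (uindep M) set0 set0 B by case: mB.
case: (@exch E (uindep M) ax D K B C e bB sKB cC eC eB eK) => f /setDP[fC fB] bB'.
set B' := f |: (B :\ e).
have fe : f != e by apply/negP => /eqP fe; rewrite fe eB in fB.
have fG : f \in mground D K.
  by case/and3P: cC => sC _ _; move/subsetP: sC; apply.
have fD : f \notin D by move: fG; rewrite /mground !inE negb_or => /andP[].
have sumE : forall ws : E -> R, \sum_(x in B') ws x = \sum_(x in B) ws x - ws e + ws f.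
  move=> ws; rewrite /B' big_setU1 /=; last by rewrite !inE negb_and fB orbT.
  rewrite (big_setD1 _ eB) /=; lra.
have wee : forall ws, wassign M ws -> ws e = uw M e.
  by move=> ws wa; have := wa e; rewrite et.
have key : forall ws, wassign M ws -> consistent M Q ws -> ws e <= ws f.
  move=> ws wa co; have [_ h] := vQB ws wa co.
  have := h B' bB'; rewrite sumE; lra.
have wuw : wassign M (uw M) by move=> g; exact: uw_in.
have cuw : consistent M Q (uw M) by [].
have ueuf := key _ wuw cuw.
have ufue := Cmax f fC.
have claim : forall ws, wassign M ws -> consistent M Q ws -> ws f = uw M f.
  move=> ws wa co; case: (eqVneq (ws f) (uw M f)) => // hne; exfalso.
  have fQ : f \notin Q by apply/negP => fQ; move: (co f fQ) => /eqP; rewrite (negbTE hne).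
  have ntf : ~ utrivial M f.
    by move=> tf; have := wa f; rewrite tf => /eqP; rewrite (negbTE hne).
  apply: (Hnt f fG ntf); left; split; last first.
    exists C; split => // g gC; exact: le_trans (Cmax g gC) ueuf.
  have lb : forall x, Aset M f x -> uw M f <= x.
    move=> x Ax.
    pose ws' := fun g => if g == f then x else ws g.
    have wa' : wassign M ws'.
      by move=> g; rewrite /ws'; case: eqP => [->|_] //.
    have co' : consistent M Q ws'.
      move=> g gQ; rewrite /ws'; case: eqP => [eg|_]; last exact: co.
      by move: fQ; rewrite -eg gQ.
    have ef : (e == f) = false by rewrite eq_sym (negbTE fe).
    have := key _ wa' co'; rewrite /ws' ef eqxx.
    rewrite (wee ws wa) => h'; exact: le_trans ufue h'.
  apply/le_anti/andP; split.
    apply: lb_le_inf; first by exists (uw M f); exact: uw_in.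
    by move=> y Ay; exact: lb.
  have hl : classical_sets.has_lbound (Aset M f).
    by exists (uw M f) => y Ay; exact: lb.
  exact: (ge_inf hl) (uw_in M f).
have vQB' : verifies M Q B'.
  move=> ws wa co; split => // B'' bB''.
  have [_ h] := vQB ws wa co; have := h B'' bB''.
  rewrite sumE (wee ws wa) (claim ws wa co); lra.
exists Q, B'; split => //.
- exact: vQB' _ wuw cuw.
- apply/subsetP => x xK; rewrite /B' !inE.
  have -> : x == e = false by apply/negbTE/negP => /eqP xe; rewrite -xe xK in eK.
  by rewrite (subsetP sKB x xK) orbT.
- apply/pred0P => x /=; rewrite /B' !inE.
  case: (eqVneq x e) => [->|xe] /=; first by rewrite eq_sym (negbTE fe).
  case: (boolP (x \in D)) => //= xD.
  have xB : x \notin B by apply/negP => xB; move/pred0P: dDB => /(_ x); rewrite /= xD xB.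
  rewrite (negbTE xB) orbF.
  by apply/negP => /eqP xf; move: fD; rewrite -xf xD.
Qed.
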